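(* Every finitely satisfiable $\mathsf{BST}^{\otimes}$-conjunction is fulfilled by an accessible $\otimes$-graph that admits a topological $\otimes$-order.
   Context: Sets range over the von Neumann universe of well-founded sets. For sets $s,t$, $s\otimes t=\{\{u,v\} : u\in s,\ v\in t\}$. A $\mathsf{BST}^{\otimes}$-conjunction is a finite conjunction of literals of the forms $x=y\cup z$, $x=y\setminus z$, $x=y\otimes z$, $x\neq y$ ($x,y,z$ set variables); it is finitely satisfiable if it is satisfied by some set assignment $M$ on its variables (variables interpreted as the sets $Mv$, operators with usual meaning) with $\bigcup_v Mv$ finite. A $\otimes$-graph $\mathcal G=(\mathcal P,\mathcal N,\mathcal T)$ consists of a set $\mathcal P$ of places, the set of nodes $\mathcal N=\mathcal P\otimes\mathcal P$ (the nonempty subsets of $\mathcal P$ with at most two elements), $\mathcal P\cap\mathcal N=\emptyset$, and a target map $\mathcal T:\mathcal N\to\mathcal P(\mathcal P)$. A source place is a place belonging to no $\mathcal T(A)$; a node $A$ is a $\otimes$-node if $\mathcal T(A)\neq\emptyset$. The accessible places form the smallest set of places containing all source places and containing $\mathcal T(A)$ whenever all places of $A$ belong to it; $\mathcal G$ is accessible if every place is accessible. A topological $\otimes$-order of $\mathcal G$ is a total order $\prec$ on $\mathcal P$ with $\max_\prec A\prec\max_\prec\mathcal T(A)$ for every $\otimes$-node $A$. A map $\mathfrak F:\mathrm{Vars}(\Phi)\to\mathcal P(\mathcal P)$ is $\mathcal G$-fulfilling for $\Phi$ if: (a) $\mathfrak F(x)=\mathfrak F(y)\star\mathfrak F(z)$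 for each conjunct $x=y\star z$, $\star\in\{\cup,\setminus\}$; (b) $\mathfrak F(x)\neq\mathfrak F(y)$ for each conjunct $x\neq y$; (c) for each conjunct $x=y\otimes z$: (c1) $\emptyset\neq\mathcal T(\{\upsilon,\zeta\})\subseteq\mathfrak F(x)$ for all $\upsilon\in\mathfrak F(y),\zeta\in\mathfrak F(z)$; (c2) $\mathfrak F(x)\subseteq\bigcup\{\mathcal T(A):A\in\mathfrak F(y)\otimes\mathfrak F(z)\}$; (c3) $\bigcup\{\mathcal T(A):A\in\mathcal N\setminus(\mathfrak F(y)\otimes\mathfrak F(z))\}\cap\mathfrak F(x)=\emptyset$. $\mathcal G$ fulfills $\Phi$ if such a map exists. *)

(* Defs.v *)
From Stdlib Require Import List.
From mathcomp Require Import all_boot.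
Set Implicit Arguments. Unset Strict Implicit. Unset Printing Implicit Defensive.

Inductive Ens : Type := sup (A : Type) (f : A -> Ens).

Fixpoint EEq (x y : Ens) {struct x} : Prop :=
  match x, y with
  | sup A f, sup B g =>
      (forall a, exists b, EEq (f a) (g b)) /\ (forall b, exists a, EEq (f a) (g b))
  end.

Definition EIn (x y : Ens) : Prop :=
  match y with sup B g => exists b, EEq x (g b) end.

Definition EPair (u v : Ens) : Ens := sup (fun b : bool => if b then u else v).

Definition var := nat.

Inductive literal : Type :=
| LUnion  : var -> var -> var -> literal
| LDiff   : var -> var -> var -> literal
| LOtimes : var -> var -> var -> literal
| LNeq    : var -> var -> literal.

Definition conjunction := seq literal.

Definition lit_vars (l : literal) : seq var :=
  match l with
  | LUnion x y z | LDiff x y z | LOtimes x y z => [:: x; y; z]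
  | LNeq x y => [:: x; y]
  end.

Definition Vars (Phi : conjunction) : seq var := flatten (map lit_vars Phi).

Definition sat_lit (M : var -> Ens) (l : literal) : Prop :=
  match l with
  | LUnion x y z => forall w, EIn w (M x) <-> (EIn w (M y) \/ EIn w (M z))
  | LDiff x y z => forall w, EIn w (M x) <-> (EIn w (M y) /\ ~ EIn w (M z))
  | LOtimes x y z => forall w, EIn w (M x) <->
        exists u v, EIn u (M y) /\ EIn v (M z) /\ EEq w (EPair u v)
  | LNeq x y => ~ EEq (M x) (M y)
  end.

Definition finitely_satisfiable (Phi : conjunction) : Prop :=
  exists M : var -> Ens,
    (forall l, List.In l Phi -> sat_lit M l) /\
    exists (n : nat) (e : 'I_n -> Ens), forall v w, List.In v (Vars Phi) -> EIn w (M v) ->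
       exists i, EEq w (e i).

(* Places: a finite type P.  Nodes {a,b} (a = b allowed) are represented by
   pairs of places; the target map T must be symmetric so that it is a
   function of the unordered node {a,b}. *)
Record otimes_graph := OGraph {
  place :> finType;
  target : place -> place -> {set place};
  target_sym : forall a b, target a b = target b a
}.

Section Graphs.
Variable G : otimes_graph.
Local Notation P := (place G).
Local Notation T := (@target G).

Definition node_in (S1 S2 : {set P}) (a b : P) : Prop :=
  exists u v, u \in S1 /\ v \in S2 /\ ((a = u /\ b = v) \/ (a = v /\ b = u)).

Definition source_place (p : P) : Prop := forall a b, p \notin T a b.

Definition otimes_node (a b : P) : Prop := T a b != set0.

Inductive accessible : P -> Prop :=
| acc_source : forall p, source_place p -> accessible p
| acc_step : forall a b p, accessible a -> accessible b -> p \in T a b -> accessible p.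

Definition graph_accessible : Prop := forall p : P, accessible p.

Definition strict_total_order (lt : P -> P -> Prop) : Prop :=
  (forall x, ~ lt x x) /\
  (forall x y z, lt x y -> lt y z -> lt x z) /\
  (forall x y, x <> y -> lt x y \/ lt y x).

Definition is_max (lt : P -> P -> Prop) (S : P -> Prop) (q : P) : Prop :=
  S q /\ forall r, S r -> r = q \/ lt r q.

Definition topological_order (lt : P -> P -> Prop) : Prop :=
  strict_total_order lt /\
  forall a b, otimes_node a b ->
    exists m q, is_max lt (fun r => r = a \/ r = b) m /\
                is_max lt (fun r => r \in T a b) q /\ lt m q.

Definition has_topological_order : Prop := exists lt, topological_order lt.

Definition fulfilling_lit (F : var -> {set P}) (l : literal) : Prop :=
  match l with
  | LUnion x y z => F x = F y :|: F z
  | LDiff x y z => F x = F y :\: F z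
  | LNeq x y => F x <> F y
  | LOtimes x y z =>
      (forall u v, u \in F y -> v \in F z -> T u v != set0 /\ T u v \subset F x) /\
      (forall p, p \in F x -> exists a b, node_in (F y) (F z) a b /\ p \in T a b) /\
      (forall a b, ~ node_in (F y) (F z) a b -> [disjoint T a b & F x])
  end.

Definition fulfilling (Phi : conjunction) (F : var -> {set P}) : Prop :=
  forall l, List.In l Phi -> fulfilling_lit F l.

Definition fulfills (Phi : conjunction) : Prop := exists F, fulfilling Phi F.

End Graphs.

(* Main.v *)
Require Import Defs.
From Stdlib Require Import Classical ClassicalEpsilon Relations Wellfounded.
From mathcomp Require Import all_boot.
From mathcomp Require Import zify.
Set Implicit Arguments. Unset Strict Implicit. Unset Printing Implicit Defensive.

Definition pb (P : Prop) : bool := if excluded_middle_informative P then true else false.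
Lemma pbP P : reflect P (pb P).
Proof. rewrite /pb; case: excluded_middle_informative => h; by constructor. Qed.

Lemma EEq_refl x : EEq x x.
Proof. elim: x => A f IH /=; split=> a; exists a; exact: IH. Qed.

Lemma EEq_sym x y : EEq x y -> EEq y x.
Proof.
elim: x y => A f IH [B g] /= [h1 h2]; split=> b.
- by case: (h2 b) => a h; exists a; apply: IH.
- by case: (h1 b) => a h; exists a; apply: IH.
Qed.

Lemma EEq_trans x y z : EEq x y -> EEq y z -> EEq x z.
Proof.
elim: x y z => A f IH [B g] [C h] /= [h1 h2] [k1 k2]; split.
- move=> a; case: (h1 a) => b hb; case: (k1 b) => c hc; exists c; exact: IH hb hc.
- move=> c; case: (k2 c) => b hb; case: (h2 b) => a ha; exists a; exact: IH ha hb.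
Qed.

Lemma EIn_l x x' y : EEq x x' -> EIn x y -> EIn x' y.
Proof. case: y => B g /= h [b hb]; exists b; exact: EEq_trans (EEq_sym h) hb. Qed.

Lemma EIn_r x y y' : EEq y y' -> EIn x y -> EIn x y'.
Proof.
case: y => B g; case: y' => B' g' /= [h1 _] [b hb].
case: (h1 b) => b' h'; exists b'; exact: EEq_trans hb h'.
Qed.

Lemma EIn_pair w u v : EIn w (EPair u v) <-> EEq w u \/ EEq w v.
Proof.
split => /=.
- by case=> [[]] h; [left|right].
- by case=> h; [exists true | exists false].
Qed.

Lemma EEq_pair u v u' v' : EEq u u' -> EEq v v' -> EEq (EPair u v) (EPair u' v').
Proof.
move=> hu hv /=; split=> [[]|[]]; [exists true|exists false|exists true|exists false] => //.
Qed.

Lemma EEq_pair_swap u v : EEq (EPair u v) (EPair v u).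
Proof.
rewrite /=; split=> [[]|[]]; [exists false|exists true|exists false|exists true];
  exact: EEq_refl.
Qed.

Lemma pair_ext a b u v : EEq (EPair a b) (EPair u v) ->
  (EEq a u /\ EEq b v) \/ (EEq a v /\ EEq b u).
Proof.
move=> H.
have ha : EIn a (EPair u v) by apply: (EIn_r H); exists true; exact: EEq_refl.
have hb : EIn b (EPair u v) by apply: (EIn_r H); exists false; exact: EEq_refl.
have hu : EIn u (EPair a b) by apply: (EIn_r (EEq_sym H)); exists true; exact: EEq_refl.
have hv : EIn v (EPair a b) by apply: (EIn_r (EEq_sym H)); exists false; exact: EEq_refl.
move/EIn_pair: ha; move/EIn_pair: hb; move/EIn_pair: hu; move/EIn_pair: hv.
move=> [hv|hv] [hu|hu] [hb|hb] [ha|ha];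
  first [ left; split; by eauto using EEq_trans, EEq_sym
        | right; split; by eauto using EEq_trans, EEq_sym ].
Qed.

Lemma wf_EIn : well_founded EIn.
Proof.
move=> x; elim: x => A f IH; constructor => y /= [a h].
constructor => z hz; apply: (Acc_inv (IH a)); exact: EIn_r h hz.
Qed.

Lemma tc_irr x : ~ clos_trans Ens EIn x x.
Proof.
have := wf_clos_trans _ _ wf_EIn x; elim => y _ IH; exact: (fun h => IH y h h).
Qed.

Definition below n (e : 'I_n -> Ens) (p q : 'I_n) : Prop :=
  clos_trans Ens EIn (e p) (e q).
Definition rk n (e : 'I_n -> Ens) (q : 'I_n) : nat :=
  #|[set p : 'I_n | pb (below e p q)]|.

Lemma rk_lt n (e : 'I_n -> Ens) a q : EIn (e a) (e q) -> rk e a < rk e q.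
Proof.
move=> h; rewrite /rk; apply: proper_card; apply/properP; split.
- apply/subsetP => p; rewrite !inE => /pbP hp; apply/pbP.
  exact: t_trans _ _ _ _ hp (t_step _ _ _ _ h).
- exists a; rewrite !inE; first by apply/pbP; exact: t_step.
  by apply/negP => /pbP; apply: tc_irr.
Qed.

Definition key n (e : 'I_n -> Ens) (i : 'I_n) : nat := rk e i * n + i.

Lemma key_inj n (e : 'I_n -> Ens) i j : key e i = key e j -> i = j.
Proof.
move=> H; apply: val_inj => /=.
have : key e i %% n = key e j %% n by rewrite H.
by rewrite /key !modnMDl !modn_small.
Qed.

Lemma key_lt n (e : 'I_n -> Ens) a q : rk e a < rk e q -> key e a < key e q.
Proof. rewrite /key => h; have := ltn_ord a; nia. Qed.

Definition tgt n (e : 'I_n -> Ens) (a b : 'I_n) : {set 'I_n} :=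
  [set k | pb (EEq (e k) (EPair (e a) (e b)))].

Lemma tgt_sym n (e : 'I_n -> Ens) a b : tgt e a b = tgt e b a.
Proof.
apply/setP => k; rewrite !inE; apply/pbP/pbP => h;
  exact: EEq_trans h (EEq_pair_swap _ _).
Qed.

Definition GG n (e : 'I_n -> Ens) : otimes_graph :=
  {| place := 'I_n; target := tgt e; target_sym := tgt_sym e |}.

Lemma In_cat (x : var) (s1 s2 : seq var) : List.In x s1 -> List.In x (s1 ++ s2).
Proof. elim: s1 => //= y s IH [->|h]; [by left | right; exact: IH]. Qed.
Lemma In_cat2 (x : var) (s1 s2 : seq var) : List.In x s2 -> List.In x (s1 ++ s2).
Proof. elim: s1 => //= y s IH h; right; exact: IH. Qed.

Lemma In_Vars Phi l x : List.In l Phi -> List.In x (lit_vars l) -> List.In x (Vars Phi).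
Proof.
elim: Phi => //= l' Phi IH [->|h] hx; rewrite /Vars /=.
- exact: In_cat.
- apply: In_cat2; exact: IH.
Qed.

Theorem lemma14 (Phi : conjunction) :
  finitely_satisfiable Phi ->
  exists G : otimes_graph,
    fulfills G Phi /\ graph_accessible G /\ has_topological_order G.
Proof.
move=> [M [HM [n [e He]]]].
exists (GG e); split; [|split].
- exists (fun x => [set i : 'I_n | pb (EIn (e i) (M x))]) => l Hl.
  have Hs := HM l Hl.
  have Hv : forall x, List.In x (lit_vars l) -> forall w, EIn w (M x) ->
      exists i, EEq w (e i).
    by move=> x hx w hw; apply: He hw; exact: In_Vars Hl hx.
  case: l Hl Hs Hv => [x y z|x y z|x y z|x y] Hl /= Hs Hv.
  + apply/setP => i; rewrite !inE; apply/idP/idP.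
    * by move=> /pbP/Hs [h|h]; apply/orP; [left|right]; apply/pbP.
    * by case/orP => /pbP h; apply/pbP; apply/Hs; [left|right].
  + apply/setP => i; rewrite !inE; apply/idP/idP.
    * move=> /pbP/Hs [h1 h2]; apply/andP; split; last by apply/pbP.
      by apply/negP => /pbP.
    * case/andP => /negP hn /pbP ha; apply/pbP; apply/Hs; split => // h.
      by apply: hn; apply/pbP.
  + split; [|split].
    * move=> u v; rewrite !inE => /pbP hu /pbP hv.
      have hw : EIn (EPair (e u) (e v)) (M x).
        by apply/Hs; exists (e u), (e v); split => //; split => //; exact: EEq_refl.
      split.
      -- case: (Hv x _ _ hw) => [|k hk]; first by left.
         apply/set0Pn; exists k; rewrite /= /tgt inE; apply/pbP; exact: EEq_sym hk.
      -- apply/subsetP => k; rewrite /= /tgt !inE => /pbP hk; apply/pbP.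
         exact: EIn_l (EEq_sym hk) hw.
    * move=> p; rewrite inE => /pbP /Hs [u [v [hu [hv hp]]]].
      case: (Hv y _ _ hu) => [|a ha]; first by right; left.
      case: (Hv z _ _ hv) => [|b hb]; first by right; right; left.
      exists a, b; split.
      -- exists a, b; rewrite !inE; split; first by apply/pbP; exact: EIn_l ha hu.
         split; first by apply/pbP; exact: EIn_l hb hv.
         by left.
      -- rewrite /= /tgt inE; apply/pbP; exact: EEq_trans hp (EEq_pair ha hb).
    * move=> a b hn; rewrite disjoint_subset; apply/subsetP => p; rewrite /= /tgt !inE => /pbP hp; apply/negP => /pbP hx.
      case/Hs: hx => u [v [hu [hv hq]]].
      case: (pair_ext (EEq_trans (EEq_sym hp) hq)) => [[h1 h2]|[h1 h2]];
        apply: hn; [exists a, b | exists b, a]; rewrite !inE.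
      -- split; first by apply/pbP; exact: EIn_l (EEq_sym h1) hu.
         split; first by apply/pbP; exact: EIn_l (EEq_sym h2) hv.
         by left.
      --
         split; first by apply/pbP; exact: EIn_l (EEq_sym h2) hu.
         split; first by apply/pbP; exact: EIn_l (EEq_sym h1) hv.
         by right.
  + move=> hF; apply: Hs.
    have hx := Hv x (or_introl erefl).
    have hy := Hv y (or_intror (or_introl erefl)).
    have key : forall i, EIn (e i) (M x) <-> EIn (e i) (M y).
      move=> i; move/setP/(_ i): (hF); rewrite !inE => hi.
      by split => /pbP h; apply/pbP; rewrite ?hi // -hi.
    move: key hx hy; case: (M x) => A f; case: (M y) => B g key hx hy /=.
    split.
    * move=> a; case: (hx (f a)) => [|i hi]; first by exists a; exact: EEq_refl.
      have : EIn (e i) (Defs.sup f) by exists a; exact: EEq_sym hi.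
      move/key => [b hb]; exists b; exact: EEq_trans hi hb.
    * move=> b; case: (hy (g b)) => [|j hj]; first by exists b; exact: EEq_refl.
      have : EIn (e j) (Defs.sup g) by exists b; exact: EEq_sym hj.
      move/key => [a ha]; exists a; exact: EEq_sym (EEq_trans hj ha).
- move=> p.
  suff : forall k (p : 'I_n), rk e p < k -> @accessible (GG e) p by apply; exact: ltnSn.
  elim => [|k IH] p' //= hk; rewrite ltnS in hk.
  case: (classic (@source_place (GG e) p')) => hs; first exact: acc_source.
  have [a hex] := not_all_ex_not _ _ hs.
  have [b hb] := not_all_ex_not _ _ hex.
  have hin : p' \in tgt e a b by case: (p' \in tgt e a b) hb.
  have hq : EEq (e p') (EPair (e a) (e b)) by move: hin; rewrite inE => /pbP.
  apply: (@acc_step (GG e) a b p') => //.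
  + apply: IH; apply: (leq_trans _ hk); apply: rk_lt.
    apply: (EIn_r (EEq_sym hq)); exists true; exact: EEq_refl.
  + apply: IH; apply: (leq_trans _ hk); apply: rk_lt.
    apply: (EIn_r (EEq_sym hq)); exists false; exact: EEq_refl.
- exists (fun i j : 'I_n => key e i < key e j); split.
  + split; first by move=> i; rewrite ltnn.
    split; first by move=> i j k; exact: ltn_trans.
    move=> i j hij; case: (ltngtP (key e i) (key e j)) => h; [left|right|] => //.
    by exfalso; apply: hij; exact: key_inj h.
  + move=> a b /set0Pn [q0 hq0].
    case: (@arg_maxnP _ q0 (mem (tgt e a b)) (key e) hq0) => q hq hmax.
    have hq' : EEq (e q) (EPair (e a) (e b)) by have hq1 : q \in tgt e a b := hq; move: hq1; rewrite inE => /pbP.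
    have ha : key e a < key e q.
      apply: key_lt; apply: rk_lt; apply: (EIn_r (EEq_sym hq')); exists true; exact: EEq_refl.
    have hb : key e b < key e q.
      apply: key_lt; apply: rk_lt; apply: (EIn_r (EEq_sym hq')); exists false; exact: EEq_refl.
    exists (if key e a < key e b then b else a), q; split; [|split].
    * case: ifP => h; split; try by [left|right].
      -- move=> r [->|->]; [right|left] => //.
      -- move=> r [->|->]; first by left.
         have [h'|h'|h'] := ltngtP (key e b) (key e a);
           [by right | by rewrite h' in h | by left; exact: key_inj h'].
    * split => // r hr; have : key e r <= key e q := hmax r hr; rewrite leq_eqVlt.
      by case/orP => [/eqP hh|hh]; [left; exact: key_inj hh | right].
    * by case: ifP.
Qed.
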